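(* Let $X$ be a nonempty compact convex subset of $\mathbb{R}^n$, let $\varphi:X\to\mathbb{R}$ be upper semicontinuous and strongly concave on $X$ with modulus $c>0$, and let $\psi:X\to\mathbb{R}$ be Lipschitz continuous with constant $L_\psi$ with respect to the Euclidean norm. Then $\varphi$ attains its maximum on $X$ at a unique point $x_0$, and for every $\delta\geq0$, \[ \Big|\sup_{x\in X}\big(\varphi(x)+\delta\psi(x)\big)-\big(\varphi(x_0)+\delta\psi(x_0)\big)\Big|\leq L_\psi\,\delta\sqrt{\frac{2\delta M}{c}}, \] where $M=\sup_X\psi-\inf_X\psi$.
   Context: $\varphi$ is strongly concave on $X$ with modulus $c$ if $-\varphi-\frac c2\|\cdot\|_2^2$ is convex on $X$. *)

(* Defs.v *)
From HB Require Import structures.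
From mathcomp Require Import all_boot all_order all_algebra.
From mathcomp Require Import all_classical all_reals all_analysis.
Set Implicit Arguments. Unset Strict Implicit. Unset Printing Implicit Defensive.
Import Order.TTheory GRing.Theory Num.Theory.
Import numFieldNormedType.Exports.
Local Open Scope classical_set_scope.
Local Open Scope ring_scope.

Definition enorm {R : realType} {n : nat} (x : 'rV[R]_n) : R :=
  Num.sqrt (\sum_(i < n) x ord0 i ^+ 2).

Definition convex_subset {R : realType} {n : nat} (X : set 'rV[R]_n) : Prop :=
  forall x y (t : R), X x -> X y -> 0 <= t <= 1 -> X (t *: x + (1 - t) *: y).

Definition convex_fun_on {R : realType} {n : nat} (X : set 'rV[R]_n)
  (f : 'rV[R]_n -> R) : Prop :=
  forall x y (t : R), X x -> X y -> 0 <= t <= 1 ->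
    f (t *: x + (1 - t) *: y) <= t * f x + (1 - t) * f y.

Definition strongly_concave_on {R : realType} {n : nat} (X : set 'rV[R]_n)
  (phi : 'rV[R]_n -> R) (c : R) : Prop :=
  convex_fun_on X (fun x => - phi x - c / 2 * enorm x ^+ 2).

Definition usc_on_set {R : realType} {n : nat} (X : set 'rV[R]_n)
  (phi : 'rV[R]_n -> R) : Prop :=
  forall x, X x -> forall e : R, 0 < e ->
    \forall y \near x, X y -> phi y < phi x + e.

Definition euclid_lipschitz_on {R : realType} {n : nat} (X : set 'rV[R]_n)
  (psi : 'rV[R]_n -> R) (L : R) : Prop :=
  forall x y, X x -> X y -> `|psi x - psi y| <= L * enorm (x - y).

(* Main.v *)
Require Import Defs.
From HB Require Import structures.
From mathcomp Require Import all_boot all_order all_algebra.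
From mathcomp Require Import all_classical all_reals all_analysis.
From mathcomp Require Import ring lra finmap.
Import Order.TTheory GRing.Theory Num.Theory.
Import numFieldNormedType.Exports.
Local Open Scope classical_set_scope.
Local Open Scope ring_scope.

Definition qn {R : realType} {n : nat} (z : 'rV[R]_n) : R := \sum_(i < n) z ord0 i ^+ 2.

Lemma qn_ge0 {R : realType} {n : nat} (z : 'rV[R]_n) : 0 <= qn z.
Proof. by apply: sumr_ge0 => i _; rewrite sqr_ge0. Qed.

Lemma enorm_sq {R : realType} {n : nat} (z : 'rV[R]_n) : enorm z ^+ 2 = qn z.
Proof. by rewrite /enorm sqr_sqrtr // qn_ge0. Qed.

Lemma qn_id {R : realType} {n : nat} (x y : 'rV[R]_n) t :
  t * qn x + (1 - t) * qn y - qn (t *: x + (1 - t) *: y) = t * (1 - t) * qn (x - y).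
Proof.
rewrite /qn !mulr_sumr -!big_split /= -sumrN -big_split /=.
by apply: eq_bigr => i _; rewrite !mxE; ring.
Qed.

Lemma qn_eq0 {R : realType} {n : nat} (z : 'rV[R]_n) : qn z = 0 -> z = 0.
Proof.
move=> /eqP; rewrite /qn psumr_eq0; last by move=> i _; rewrite sqr_ge0.
move=> /allP H; apply/rowP => i; rewrite mxE.
have := H i (mem_index_enum i); rewrite sqrf_eq0 => /eqP //.
Qed.

Lemma entry_le {R : realType} {n : nat} (z : 'rV[R]_n) i : `|z ord0 i| <= `|z|.
Proof.
have -> : `|z| = mx_norm z by [].
rewrite mx_normrE.
exact: (le_bigmax _ _ (ord0, i)).
Qed.

Lemma strong_ineq {R : realType} {n : nat} (X : set 'rV[R]_n) phi c x y t :
  strongly_concave_on X phi c -> X x -> X y -> 0 <= t <= 1 ->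
  t * phi x + (1 - t) * phi y + c / 2 * (t * (1 - t) * qn (x - y))
   <= phi (t *: x + (1 - t) *: y).
Proof.
move=> H Xx Xy t01; have := H x y t Xx Xy t01.
rewrite !enorm_sq -qn_id => h; lra.
Qed.
Lemma seq_argmax {R : realType} {I : eqType} (g : I -> R) (s : seq I) :
  s != [::] -> exists2 i, i \in s & forall j, j \in s -> g j <= g i.
Proof.
elim: s => // a s IH _.
case: (eqVneq s [::]) => [->|sn].
  by exists a; rewrite ?mem_head // => j; rewrite inE => /eqP ->.
have [i is_ Hi] := IH sn.
case: (leP (g a) (g i)) => h.
  exists i; first by rewrite inE is_ orbT.
  by move=> j; rewrite inE => /orP[/eqP->|/Hi].
exists a; first by rewrite mem_head.
move=> j; rewrite inE => /orP[/eqP->//|/Hi hj].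
exact: le_trans hj (ltW h).
Qed.

Lemma usc_max {R : realType} {n : nat} (X : set 'rV[R]_n) (phi : 'rV[R]_n -> R) :
  X !=set0 -> compact X -> usc_on_set X phi ->
  exists x0, X x0 /\ forall x, X x -> phi x <= phi x0.
Proof.
move=> [x1 Xx1] cX usc.
case: (pselect (exists x0, X x0 /\ forall x, X x -> phi x <= phi x0)) => // Hn.
exfalso.
have Hy : forall x, X x -> exists y, X y /\ phi x < phi y.
  move=> x Xx; case: (pselect (exists y, X y /\ phi x < phi y)) => // Hn2; exfalso.
  apply: Hn; exists x; split => // y Xy; rewrite leNgt; apply/negP => h.
  by apply: Hn2; exists y.
pose I := ('rV[R]_n * 'rV[R]_n)%type.
pose D : set I := [set p | [/\ X p.1, X p.2 & phi p.1 < phi p.2]].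
pose f : I -> set 'rV[R]_n := fun p => interior [set z | X z -> phi z < phi p.2].
have fop : forall i, D i -> open (f i) by move=> i _; exact: open_interior.
have fcov : X `<=` cover D f.
  move=> x Xx; have [y [Xy hxy]] := Hy x Xx.
  exists (x, y) => //.
  rewrite /f /interior /=.
  have e0 : 0 < phi y - phi x by rewrite subr_gt0.
  apply: filterS (usc x Xx _ e0) => z h Xz; have := h Xz; lra.
rewrite compact_cover in cX.
have [D' sD' cov] := cX I D f fop fcov.
have [i1 i1D' _] := cov x1 Xx1.
have i1s : i1 \in (D' : seq I) by exact: i1D'.
have ne : (D' : seq I) != [::].
  by apply/negP => /eqP e; move: i1s; rewrite e.
have [[a b] abD Hab] := @seq_argmax R _ (fun p : I => phi p.2) _ ne.
have := sD' (a, b) abD; rewrite in_setE => -[_ Xb _].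
have [j jD' fj] := cov b Xb.
have := interior_subset fj Xb => /=.
have := Hab j jD' => /=; lra.
Qed.

Lemma aux_le {R : realType} (a b : R) : 0 <= a ->
  (forall t, 0 < t <= 1 -> b * (1 - t) <= a) -> b <= a.
Proof.
move=> a0 H; rewrite leNgt; apply/negP => ab.
have b0 : 0 < b by exact: le_lt_trans ab.
have t0 : 0 < (b - a) / (2 * b) by rewrite divr_gt0 // ?subr_gt0 // mulr_gt0.
have t1 : (b - a) / (2 * b) <= 1.
  rewrite ler_pdivrMr ?mulr_gt0 //; lra.
have := H _ (andb_true_intro (conj t0 t1)).
have -> : b * (1 - (b - a) / (2 * b)) = (a + b) / 2.
  field; rewrite gt_eqF //.
lra.
Qed.

Lemma quad_growth {R : realType} {n : nat} (X : set 'rV[R]_n) phi c x0 x :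
  convex_subset X -> strongly_concave_on X phi c -> 0 < c ->
  X x0 -> (forall y, X y -> phi y <= phi x0) -> X x ->
  c / 2 * qn (x - x0) <= phi x0 - phi x.
Proof.
move=> cvX sc c0 Xx0 Hmax Xx.
apply: aux_le; first by rewrite subr_ge0 Hmax.
move=> t /andP[t0 t1].
have t01 : 0 <= t <= 1 by rewrite (ltW t0) t1.
have h1 := @strong_ineq _ _ X phi c x x0 t sc Xx Xx0 t01.
have h2 := Hmax _ (cvX x x0 t Xx Xx0 t01).
have key : t * (c / 2 * qn (x - x0) * (1 - t)) <= t * (phi x0 - phi x).
  move: h1 h2; set q := qn _; set u := phi _; set v := phi x; set w := phi x0.
  move=> h1 h2. nra.
by move: key; rewrite ler_pM2l.
Qed.

Lemma qn_le {R : realType} {n : nat} (z : 'rV[R]_n) : qn z <= n%:R * `|z| ^+ 2.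
Proof.
have -> : n%:R * `|z| ^+ 2 = \sum_(i < n) `|z| ^+ 2.
  by rewrite sumr_const card_ord mulr_natl.
apply: ler_sum => i _.
rewrite -real_normK ?num_real // lerXn2r ?nnegrE ?normr_ge0 //.
exact: entry_le.
Qed.

Lemma psi_bounded {R : realType} {n : nat} (X : set 'rV[R]_n) psi L x0 :
  compact X -> euclid_lipschitz_on X psi L -> X x0 ->
  exists K, forall x, X x -> `|psi x - psi x0| <= K.
Proof.
move=> cX lip Xx0.
have [M [Mr HM]] := compact_bounded cX.
have HB := HM (`|M| + 1) (le_lt_trans (real_ler_norm Mr) (ltr_pwDr ltr01 (lexx _))).
set B := `|M| + 1 in HB.
exists (`|L| * Num.sqrt (n%:R * (2 * B) ^+ 2)) => x Xx.
apply: (le_trans (lip x x0 Xx Xx0)).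
apply: (le_trans (ler_wpM2r _ (ler_norm L))); first by rewrite sqrtr_ge0.
apply: ler_wpM2l => //; rewrite /enorm ler_sqrt; last first.
  by rewrite mulr_ge0 // sqr_ge0.
apply: (le_trans (qn_le _)); apply: ler_wpM2l => //.
rewrite lerXn2r ?nnegrE ?normr_ge0 //; first by rewrite /B; have := normr_ge0 M; lra.
apply: (le_trans (ler_normB _ _)).
have := HB x Xx; have := HB x0 Xx0 => /= h1 h2; lra.
Qed.

Theorem corollary5p13 (R : realType) (n : nat) (X : set 'rV[R]_n)
  (phi psi : 'rV[R]_n -> R) (c Lpsi : R) :
  X !=set0 -> compact X -> convex_subset X ->
  usc_on_set X phi -> 0 < c -> strongly_concave_on X phi c ->
  euclid_lipschitz_on X psi Lpsi ->
  exists x0, [/\ X x0, (forall x, X x -> phi x <= phi x0),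
    (forall y, X y -> (forall x, X x -> phi x <= phi y) -> y = x0) &
    forall delta : R, 0 <= delta ->
      `| sup [set phi x + delta * psi x | x in X] - (phi x0 + delta * psi x0) |
      <= Lpsi * delta * Num.sqrt (2 * delta *
           (sup [set psi x | x in X] - inf [set psi x | x in X]) / c)].
Proof.
move=> Xne cX cvX usc c0 sc lip.
have [x0 [Xx0 Hmax]] := @usc_max _ _ X phi Xne cX usc.
have qg := fun x => @quad_growth _ _ X phi c x0 x cvX sc c0 Xx0 Hmax.
exists x0; split => //.
  move=> y Xy Hy; have h := qg y Xy; have := Hy x0 Xx0; have := Hmax y Xy.
  move=> h1 h2.
  have hq : qn (y - x0) <= 0.
    have : c / 2 * qn (y - x0) <= 0 by lra.
    by rewrite pmulr_rle0 // divr_gt0.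
  have : qn (y - x0) = 0 by apply/eqP; rewrite eq_le hq qn_ge0.
  by move/qn_eq0/eqP; rewrite subr_eq0 => /eqP.
move=> delta d0.
set Psi := [set psi x | x in X].
have [K HK] := @psi_bounded _ _ X psi Lpsi x0 cX lip Xx0.
have hub : has_ubound Psi.
  exists (psi x0 + K) => _ [x Xx <-]; have := HK x Xx.
  move=> h; have := ler_norm (psi x - psi x0); lra.
have hlb : has_lbound Psi.
  exists (psi x0 - K) => _ [x Xx <-]; have := HK x Xx.
  by rewrite ler_norml => /andP[h1 h2]; lra.
have hsup : forall x, X x -> psi x <= sup Psi.
  by move=> x Xx; apply: ub_le_sup hub _ _; exists x.
have hinf : forall x, X x -> inf Psi <= psi x.
  by move=> x Xx; apply: ge_inf hlb _ _; exists x.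
set M := sup Psi - inf Psi.
set Bd := Lpsi * delta * Num.sqrt (2 * delta * M / c).
have Bd0 : 0 <= Bd.
  case: (leP 0 Lpsi) => L0.
    by rewrite /Bd mulr_ge0 ?mulr_ge0 ?sqrtr_ge0.
  have eqx : forall x, X x -> x = x0.
    move=> x Xx; have := lip x x0 Xx Xx0.
    have := normr_ge0 (psi x - psi x0); have : 0 <= enorm (x - x0) by rewrite /enorm sqrtr_ge0.
    move=> e0 n0 h.
    have e00 : enorm (x - x0) <= 0 by nra.
    have ee : enorm (x - x0) = 0 by apply/eqP; rewrite eq_le e00 e0.
    have : qn (x - x0) = 0 by rewrite -enorm_sq ee expr0n.
    by move/qn_eq0/eqP; rewrite subr_eq0 => /eqP.
  have sP : sup Psi <= psi x0.
    apply: ge_sup; first by exists (psi x0), x0.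
    by move=> _ [x Xx <-]; rewrite (eqx x Xx).
  have iP : psi x0 <= inf Psi.
    apply: lb_le_inf; first by exists (psi x0), x0.
    by move=> _ [x Xx <-]; rewrite (eqx x Xx).
  have M0 : 2 * delta * M / c <= 0.
    have hM : M <= 0 by rewrite /M; lra.
    have p : 0 <= 2 * delta / c by rewrite divr_ge0 // ?mulr_ge0 // ltW.
    rewrite mulrAC; move: p hM; clearbody M; nra.
  have sq0 : Num.sqrt (2 * delta * M / c) = 0 by apply/eqP; rewrite sqrtr_eq0.
  by rewrite /Bd sq0 mulr0.
have key : forall x, X x -> phi x + delta * psi x <= phi x0 + delta * psi x0 + Bd.
  move=> x Xx.
  have ha := Hmax x Xx; have hq := qg x Xx.
  case: (leP (delta * (psi x - psi x0)) (phi x0 - phi x)) => hc.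
    lra.
  have D0 : 0 < psi x - psi x0.
    rewrite ltNge; apply/negP => hD.
    have : delta * (psi x - psi x0) <= 0 by rewrite mulr_ge0_le0.
    lra.
  have hDM : psi x - psi x0 <= M.
    have := hsup x Xx; have := hinf x0 Xx0; rewrite /M; lra.
  have hqM : qn (x - x0) <= 2 * delta * M / c.
    rewrite ler_pdivlMr //.
    have : delta * (psi x - psi x0) <= delta * M by rewrite ler_wpM2l.
    lra.
  have hs := ler_wsqrtr hqM.
  have hlip := lip x x0 Xx Xx0.
  have hD : psi x - psi x0 <= Lpsi * enorm (x - x0).
    exact: le_trans (ler_norm _) hlip.
  have en0 : 0 <= enorm (x - x0) by rewrite /enorm sqrtr_ge0.
  have L0 : 0 < Lpsi.
    rewrite ltNge; apply/negP => hL.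
    have : Lpsi * enorm (x - x0) <= 0 by rewrite mulr_le0_ge0.
    lra.
  have h3 : delta * (psi x - psi x0) <= delta * (Lpsi * enorm (x - x0)).
    by rewrite ler_wpM2l.
  have h4 : Lpsi * enorm (x - x0) <= Lpsi * Num.sqrt (2 * delta * M / c).
    by rewrite ler_wpM2l // ?ltW.
  have h5 : delta * (Lpsi * enorm (x - x0)) <= Bd.
    rewrite /Bd [Lpsi * delta]mulrC mulrA; apply: ler_wpM2l; [by rewrite mulr_ge0 // ltW | exact: hs].
  lra.
set S := [set phi x + delta * psi x | x in X].
have ubS : ubound S (phi x0 + delta * psi x0 + Bd).
  by move=> _ [x Xx <-]; exact: key.
have supS : sup S <= phi x0 + delta * psi x0 + Bd.
  by apply: ge_sup => //; exists (phi x0 + delta * psi x0), x0.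
have geS : phi x0 + delta * psi x0 <= sup S.
  by apply: ub_le_sup; [exists (phi x0 + delta * psi x0 + Bd) | exists x0].
rewrite ger0_norm ?subr_ge0 //; lra.
Qed.
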